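(* Let $\mathcal{B}\subseteq\mathcal{P}(X)$ be a countable admissible algebra and let $\mathcal{D}\subseteq\mathcal{B}$. Then there is a set $A\subseteq X$ such that: (i) the algebra generated by $\mathcal{B}\cup\{A\}$ is admissible; (ii) for every $D\in\mathcal{D}$ we have $D_{|n}\subseteq A_{|n}$ for all but finitely many $n\in\omega$; (iii) $\mu(A)\le\sum_{D\in\mathcal{D}}\mu(D)$.
   Context: $\omega=\{0,1,2,\dots\}$, $2^\omega$ is the Cantor set, $\lambda$ is the usual product probability measure on $2^\omega$, and $\mathrm{Clop}(2^\omega)$ is the algebra of clopen subsets of $2^\omega$. Let $X=\omega\times 2^\omega$. For $B\subseteq X$ and $n\in\omega$, $B_{|n}=\{t\in 2^\omega:(n,t)\in B\}$. A set $B\subseteq X$ is admissible if $B_{|n}\in\mathrm{Clop}(2^\omega)$ for all $n\in\omega$ and $\lim_n\lambda(B_{|n})$ exists; in that case $\mu(B):=\lim_n\lambda(B_{|n})$. An algebra of subsets of $X$ is admissible if all its elements are admissible. *)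

(* Defs.v *)
From HB Require Import structures.
From mathcomp Require Import all_boot all_order all_algebra.
From mathcomp Require Import all_classical all_reals all_analysis.
Set Implicit Arguments. Unset Strict Implicit. Unset Printing Implicit Defensive.
Import Order.TTheory GRing.Theory Num.Theory.
Import numFieldTopology.Exports numFieldNormedType.Exports.
Local Open Scope classical_set_scope.
Local Open Scope ring_scope.

Notation Cantor := cantor_space.

Definition X : Type := (nat * Cantor)%type.

Definition Clop (C : set Cantor) : Prop := clopen C.

Definition cyl (s : seq bool) : set Cantor :=
  [set t | forall i, (i < size s)%N -> t i = nth false s i].

(* lambda, the usual product (coin-tossing) probability measure on 2^omega,
   evaluated on a set C as its inner content by cylinders:
   sup_n (#{s in 2^n | [s] subset C}) / 2^n.  For clopen C (the only sets on
   which lambda is used below) this is exactly the product measure of C,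
   since a clopen set is a finite union of cylinders of some common length n
   and each cylinder of length n has measure 2^-n. *)
Definition level_count (n : nat) (C : set Cantor) : nat :=
  (\sum_(s : n.-tuple bool) (`[< cyl s `<=` C >] : nat))%N.

Definition lam {R : realType} (C : set Cantor) : R :=
  sup [set ((level_count n C)%:R / 2%:R ^+ n : R) | n in [set: nat]].

Definition section (B : set X) (n : nat) : set Cantor := [set t | B (n, t)].

Definition admissible {R : realType} (B : set X) : Prop :=
  (forall n, Clop (section B n)) /\
  cvgn (fun n => (lam (section B n) : R)).

Definition mu {R : realType} (B : set X) : R :=
  limn (fun n => (lam (section B n) : R)).

Definition is_algebra (F : set (set X)) : Prop :=
  [/\ F set0,
      (forall A, F A -> F (~` A)) &
      (forall A B, F A -> F B -> F (A `|` B))].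

Definition admissible_algebra {R : realType} (F : set (set X)) : Prop :=
  is_algebra F /\ (forall B, F B -> @admissible R B).

Definition gen_algebra (G : set (set X)) : set (set X) :=
  [set A | forall F, is_algebra F -> G `<=` F -> F A].

(* Main.v *)
Require Import Defs.
From HB Require Import structures.
From mathcomp Require Import all_boot all_order all_algebra.
From mathcomp Require Import all_classical all_reals all_analysis.
Import Order.TTheory GRing.Theory Num.Theory.
Import numFieldTopology.Exports numFieldNormedType.Exports.
Local Open Scope classical_set_scope.
Local Open Scope ring_scope.

Definition pref (t : Cantor) m : set Cantor := [set u | forall i, (i < m)%N -> u i = t i].

Lemma open_pref (C : set Cantor) t : open C -> C t -> exists m, pref t m `<=` C.
Proof.
move=> oC Ct.
pose F := filter_from [set: nat] (pref t).
have FF : Filter F.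
  apply: filter_from_filter; first by exists 0%N.
  move=> i j _ _; exists (maxn i j) => //= u Hu; split=> k Hk; apply: Hu;
    apply: (leq_trans Hk); [exact: leq_maxl|exact: leq_maxr].
have : F --> t.
  apply/cvg_sup => i A /=.
  move=> /= ; rewrite (@nbhsE (initial_topology (fun f : Cantor => f i))) => -[B [[B0 oB0 <-] Bt] BA].
  exists i.+1 => // u Hu; apply: BA; rewrite /= Hu //.

move/(_ C) => /=.
have : nbhs t C by apply: open_nbhs_nbhs.
move=> H /(_ H) [m _ Hm]; by exists m.
Qed.

Lemma pref_open (t : Cantor) m : open (pref t m).
Proof.
elim: m => [|m IH].
  rewrite (_ : pref t 0 = setT); first exact: openT.
  by rewrite predeqE => u; split => // _ i; rewrite ltn0.
rewrite (_ : pref t m.+1 = pref t m `&` (proj m @^-1` [set t m])).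
  apply: openI => //.
  apply: open_comp; [move=> + _; exact: proj_continuous| apply: discrete_open].
rewrite predeqE => u; split.
  by move=> H; split; [move=> i Hi; apply: H; exact: ltnW| apply: H].
move=> [H1 H2] i; rewrite ltnS leq_eqVlt => /predU1P[->//|]; exact: H1.
Qed.

Definition ext (s : seq bool) : Cantor := fun i => nth false s i.

Definition dec (C : set Cantor) M := forall s : seq bool, (M <= size s)%N ->
  cyl s `<=` C \/ cyl s `<=` ~` C.

Lemma clop_dec (C : set Cantor) : Clop C -> exists M, dec C M.
Proof.
move=> [oC cC].
have oC' : open (~` C) by exact: closed_openC.
have hm : forall t, exists m, pref t m `<=` C \/ pref t m `<=` ~` C.
  move=> t; have [Ct|nCt] := pselect (C t).
    by have [m Hm] := open_pref _ _ oC Ct; exists m; left.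
  by have [m Hm] := open_pref _ _ oC' nCt; exists m; right.
pose m t := projT1 (cid (hm t)).
have mP t : pref t (m t) `<=` C \/ pref t (m t) `<=` ~` C := projT2 (cid (hm t)).
have := cantor_space_compact; rewrite compact_cover => /(_ Cantor setT (fun t => pref t (m t))).
case.
- by move=> t _; exact: pref_open.
- by move=> t _; exists t => // i.
move=> D' _ cov.
exists (\max_(t <- finmap.enum_fset D') m t) => s Hs.
have [t Dt Ht] := cov (ext s) I.
have Hle : (m t <= size s)%N.
  apply: leq_trans Hs; rewrite (big_rem t) //=; exact: leq_maxl.
have sub : cyl s `<=` pref t (m t).
  move=> u Hu i Hi; rewrite -(Ht i Hi) /ext -Hu //; exact: leq_trans Hi Hle.
by case: (mP t) => H; [left|right]; apply: subset_trans H.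
Qed.
Lemma sum_rcons n (F : n.+1.-tuple bool -> nat) :
  (\sum_(t : n.+1.-tuple bool) F t =
   \sum_(s : n.-tuple bool) (F [tuple of rcons s true] + F [tuple of rcons s false]))%N.
Proof.
pose h := fun p : n.-tuple bool * bool => [tuple of rcons p.1 p.2].
have hinj : injective h.
  move=> [s b] [s' b'] /(congr1 val) /= /rcons_inj [] /val_inj -> ->//.
have hb : bijective h.
  apply: inj_card_bij => //.
  by rewrite card_prod !card_tuple card_bool expnS mulnC.
rewrite (reindex h); last exact: onW_bij.
rewrite -(pair_big xpredT xpredT (fun s b => F (h (s, b)))) /=.
by apply: eq_bigr => s _; rewrite big_bool.
Qed.

Lemma lc_le n C : (level_count n C <= 2 ^ n)%N.
Proof.
rewrite /level_count.
apply: (@leq_trans (\sum_(s : n.-tuple bool) 1)%N).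
  by apply: leq_sum => s _; case: asboolP.
by rewrite sum1_card card_tuple card_bool.
Qed.

Lemma lc_sub n (C C' : set Cantor) : C `<=` C' -> (level_count n C <= level_count n C')%N.
Proof.
move=> CC'; apply: leq_sum => s _.
case: asboolP => // H; case: asboolP => // H'; exfalso; apply: H'; exact: subset_trans H CC'.
Qed.

Lemma cyl_rcons (s : seq bool) b : cyl (rcons s b) `<=` cyl s.
Proof.
move=> u Hu i Hi; rewrite Hu ?size_rcons ?(ltn_trans Hi) // nth_rcons Hi //.
Qed.

Lemma lc_S n C : (2 * level_count n C <= level_count n.+1 C)%N.
Proof.
rewrite /level_count sum_rcons mul2n -addnn -big_split /=.
apply: leq_sum => s _; case: asboolP => //= H.
by rewrite !(asboolT (subset_trans (cyl_rcons _ _) H)).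
Qed.

Lemma ext_cyl s : cyl s (ext s). Proof. by []. Qed.

Lemma decE {C M} {s : seq bool} : dec C M -> (M <= size s)%N ->
  `[< cyl s `<=` C >] = `[< C (ext s) >].
Proof.
move=> dC Ms; case: (dC s Ms) => H.
  by rewrite !asboolT //; exact: H.
rewrite !asboolF // => H'; first by apply: (H (ext s)).
by apply: (H (ext s)) => //; exact: H'.
Qed.

Lemma ext_rcons (s : seq bool) b : cyl s (ext (rcons s b)).
Proof. by move=> i Hi; rewrite /ext nth_rcons Hi. Qed.

Lemma lc_S_dec {n C M} : dec C M -> (M <= n)%N ->
  level_count n.+1 C = (2 * level_count n C)%N.
Proof.
move=> dC Mn.
rewrite /level_count sum_rcons mul2n -addnn -big_split /=.
apply: eq_bigr => s _.
have Hs : (M <= size s)%N by rewrite size_tuple.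
have Hs' b : (M <= size (rcons s b))%N by rewrite size_rcons; apply: leqW.
rewrite !(decE dC (Hs' _)) (decE dC Hs).
case: (dC s Hs) => H.
  by rewrite !asboolT //; apply: H; first [exact: ext_rcons|exact: ext_cyl].
by rewrite !asboolF // => /H; apply; first [exact: ext_rcons|exact: ext_cyl].
Qed.

Lemma decU {P Q M} : dec P M -> dec Q M -> dec (P `|` Q) M.
Proof.
move=> dP dQ s Hs; case: (dP s Hs) => HP; first by left; move=> u /HP; left.
case: (dQ s Hs) => HQ; first by left; move=> u /HQ; right.
by right => u Hu [/(HP _ Hu)|/(HQ _ Hu)].
Qed.

Lemma decC {P M} : dec P M -> dec (~` P) M.
Proof.
move=> dP s Hs; case: (dP s Hs) => HP; [right|left] => u /HP //.
by move=> Pu nPu; exact: nPu.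
Qed.

Lemma decI {P Q M} : dec P M -> dec Q M -> dec (P `&` Q) M.
Proof.
move=> dP dQ; rewrite -[P `&` Q]setCK setCI; apply: decC; apply: decU; exact: decC.
Qed.

Lemma dec_mono {P M N} : (M <= N)%N -> dec P M -> dec P N.
Proof. by move=> MN dP s Hs; apply: dP; exact: leq_trans Hs. Qed.

Definition fin (C : set Cantor) := exists M, dec C M.

Lemma finU P Q : fin P -> fin Q -> fin (P `|` Q).
Proof.
move=> [M dP] [N dQ]; exists (maxn M N); apply: decU; apply: dec_mono (dP) || apply: dec_mono (dQ);
 first [exact: leq_maxl | exact: leq_maxr].
Qed.

Lemma finC P : fin P -> fin (~` P).
Proof. by move=> [M dP]; exists M; exact: decC. Qed.

Lemma finI P Q : fin P -> fin Q -> fin (P `&` Q).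
Proof.
move=> fP fQ; rewrite -[P `&` Q]setCK setCI; apply: finC; apply: finU; exact: finC.
Qed.

Lemma lc_U {n P Q M} : dec P M -> dec Q M -> P `&` Q = set0 -> (M <= n)%N ->
  level_count n (P `|` Q) = (level_count n P + level_count n Q)%N.
Proof.
move=> dP dQ PQ Mn; rewrite /level_count -big_split /=.
apply: eq_bigr => s _.
have Hs : (M <= size s)%N by rewrite size_tuple.
rewrite (decE (decU dP dQ) Hs) (decE dP Hs) (decE dQ Hs).
case: (asboolP (P (ext s))) => HP; case: (asboolP (Q (ext s))) => HQ.
- by exfalso; have : (P `&` Q) (ext s) by []; rewrite PQ.
- by rewrite asboolT //; left.
- by rewrite asboolT //; right.
- by rewrite asboolF // => -[].
Qed.

Section Lam.
Variable R : realType.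

Definition a n C : R := (level_count n C)%:R / 2%:R ^+ n.

Lemma a_ge0 n C : 0 <= a n C.
Proof. by rewrite /a divr_ge0 // exprn_ge0. Qed.

Lemma a_le1 n C : a n C <= 1.
Proof.
rewrite /a ler_pdivrMr ?exprn_gt0 // mul1r -natrX ler_nat; exact: lc_le.
Qed.

Lemma has_sup_a C : has_sup [set (a n C) | n in [set: nat]].
Proof.
split; first by exists (a 0 C), 0%N.
by exists 1 => _ [n _ <-]; exact: a_le1.
Qed.

Lemma lamE C : @lam R C = sup [set (a n C) | n in [set: nat]].
Proof. by []. Qed.

Lemma lam_ge n C : a n C <= @lam R C.
Proof. by rewrite lamE; apply: sup_upper_bound; [exact: has_sup_a | exists n]. Qed.

Lemma lam_le C (r : R) : (forall n, a n C <= r) -> @lam R C <= r.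
Proof.
move=> H; rewrite lamE; apply: ge_sup; first by exists (a 0 C), 0%N.
by move=> _ [n _ <-].
Qed.

Lemma lam_ge0 C : 0 <= @lam R C.
Proof. exact: le_trans (a_ge0 0 C) (lam_ge 0 C). Qed.

Lemma lam_le1 C : @lam R C <= 1.
Proof. by apply: lam_le => n; exact: a_le1. Qed.

Lemma a_sub n (C C' : set Cantor) : C `<=` C' -> a n C <= a n C'.
Proof.
by move=> H; rewrite /a ler_pM2r ?invr_gt0 ?exprn_gt0 // ler_nat; exact: lc_sub.
Qed.

Lemma lam_sub (C C' : set Cantor) : C `<=` C' -> @lam R C <= @lam R C'.
Proof. move=> H; apply: lam_le => n; apply: le_trans (lam_ge n C'); exact: a_sub. Qed.

Lemma aS2 n C : a n.+1 C = (level_count n.+1 C)%:R / 2 / 2%:R ^+ n.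
Proof. by rewrite /a exprS invfM mulrA. Qed.

Lemma a_S n C : a n C <= a n.+1 C.
Proof.
rewrite aS2 /a ler_pM2r ?invr_gt0 ?exprn_gt0 // ler_pdivlMr // -natrM ler_nat mulnC.
exact: lc_S.
Qed.

Lemma a_mono n m C : (n <= m)%N -> a n C <= a m C.
Proof.
move=> /subnK <-; elim: (m - n)%N => [|k IH] //=.
rewrite addSn; exact: le_trans IH (a_S _ _).
Qed.

Lemma a_S_dec {n C M} : dec C M -> (M <= n)%N -> a n.+1 C = a n C.
Proof.
move=> dC Mn; rewrite aS2 (lc_S_dec dC Mn) natrM [2 * _]mulrC mulfK //.
Qed.

Lemma a_const {n m C M} : dec C M -> (M <= n)%N -> (n <= m)%N -> a m C = a n C.
Proof.
move=> dC Mn /subnK <-; elim: (m - n)%N => [|k IH] //=.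
rewrite addSn (a_S_dec dC) // ?IH //; apply: leq_trans Mn _; exact: leq_addl.
Qed.

Lemma lam_dec {n C M} : dec C M -> (M <= n)%N -> @lam R C = a n C.
Proof.
move=> dC Mn; apply/eqP; rewrite eq_le lam_ge andbT; apply: lam_le => k.
apply: (@le_trans _ _ (a (maxn k n) C)); first by apply: a_mono; exact: leq_maxl.
by rewrite (a_const dC Mn) // leq_maxr.
Qed.

Lemma lamU P Q : fin P -> fin Q -> P `&` Q = set0 ->
  @lam R (P `|` Q) = @lam R P + @lam R Q.
Proof.
move=> [M dP] [N dQ] PQ.
have dP' := dec_mono (leq_maxl M N) dP.
have dQ' := dec_mono (leq_maxr M N) dQ.
rewrite (lam_dec (decU dP' dQ') (leqnn _)) (lam_dec dP' (leqnn _)) (lam_dec dQ' (leqnn _)).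
by rewrite /a (lc_U dP' dQ' PQ (leqnn _)) natrD mulrDl.
Qed.

Lemma lam_subadd P Q : fin P -> fin Q -> @lam R (P `|` Q) <= @lam R P + @lam R Q.
Proof.
move=> fP fQ.
have -> : P `|` Q = P `|` (Q `&` ~` P).
  rewrite predeqE => x; split; first by case=> H; [left|have [?|?] := pselect (P x); [left|right]].
  by case=> [?|[]]; [left|right].
rewrite lamU //; first (rewrite lerD2l; apply: lam_sub; exact: subIsetl).
- by apply: finI => //; exact: finC.
- by rewrite predeqE => x; split => // -[? [_ ?]].
Qed.

End Lam.
Lemma near_ex {P : nat -> Prop} : (\forall n \near \oo, P n) -> exists N, forall n, (N <= n)%N -> P n.
Proof. by move=> [N _ HN]; exists N => n Hn; apply: HN. Qed.

Lemma ex_near {P : nat -> Prop} : (exists N, forall n, (N <= n)%N -> P n) -> \forall n \near \oo, P n.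
Proof. by move=> [N HN]; exists N. Qed.

Lemma diag (R : realType) (x y : nat -> R) (l : R) (f : nat -> nat) (i : nat) :
  y @ \oo --> l ->
  (forall K, exists n0, forall n, (n0 <= n)%N -> (K <= f n)%N) ->
  (forall n, (i < f n)%N -> `|x n - y (f n)| <= (f n).+1%:R^-1) ->
  x @ \oo --> l.
Proof.
move=> yl fI xy; apply/cvgrPdist_lt => eps eps0.
have e2 : 0 < eps / 2 by rewrite divr_gt0.
have [K1 HK1] := near_ex ((iffLR (cvgrPdist_lt _ _)) yl _ e2).
have [K2 HK2] := near_ex (near_infty_natSinv_lt (PosNum e2)).
have [n0 Hn0] := fI (maxn (maxn K1 K2) i.+1).
apply: ex_near; exists n0 => n /Hn0; rewrite !geq_max => /andP[/andP[h1 h2] h3].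
rewrite (splitr eps).
apply: (le_lt_trans (ler_distD (y (f n)) _ _)).
rewrite ltrD ?HK1 //.
apply: (le_lt_trans _ (HK2 _ h2)); by rewrite distrC xy.
Qed.

Lemma lam0 (R : realType) : @lam R set0 = 0.
Proof.
apply/eqP; rewrite eq_le lam_ge0 andbT; apply: lam_le => n.
rewrite /a /level_count big1 ?mul0r // => s _; rewrite asboolF // => H.
exact: (H (ext s) (ext_cyl s)).
Qed.

Lemma mu_le (R : realType) (W W' : set X) : @admissible R W -> @admissible R W' ->
  W `<=` W' -> @mu R W <= @mu R W'.
Proof.
move=> [_ cW] [_ cW'] WW'; apply: ler_lim => //; apply: nearW => n.
apply: lam_sub => t; exact: WW'.
Qed.

Lemma mu_ge0 (R : realType) (W : set X) : @admissible R W -> 0 <= @mu R W.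
Proof. move=> [_ cW]; apply: limr_ge => //; apply: nearW => n; exact: lam_ge0. Qed.

Lemma mu_le1 (R : realType) (W : set X) : @admissible R W -> @mu R W <= 1.
Proof. move=> [_ cW]; apply: limr_le => //; apply: nearW => n; exact: lam_le1. Qed.

Lemma mu_subadd (R : realType) (W W' : set X) : @admissible R W -> @admissible R W' ->
  @admissible R (W `|` W') -> @mu R (W `|` W') <= @mu R W + @mu R W'.
Proof.
move=> [cW1 cW] [cW1' cW'] [_ cWW].
rewrite /mu -limD //; apply: ler_lim => //; first exact: is_cvgD.
apply: nearW => n /=; apply: lam_subadd; apply: clop_dec; [exact: cW1|exact: cW1'].
Qed.

Lemma mu0 (R : realType) : @mu R set0 = 0.
Proof.
rewrite /mu (_ : (fun n => @lam R (section set0 n)) = fun _ => 0) ?lim_cst //.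
by apply: funext => n; rewrite (_ : section set0 n = set0) ?lam0 // predeqE.
Qed.

Theorem lemma2p4 (R : realType) (B D : set (set X)) :
  countable B -> @admissible_algebra R B -> D `<=` B ->
  exists A : set X,
    [/\ @admissible_algebra R (gen_algebra (B `|` [set A])),
        (forall Dd, D Dd -> exists N, forall n, (N <= n)%N ->
           section Dd n `<=` section A n) &
        ((@mu R A)%:E <= \esum_(Dd in D) (@mu R Dd)%:E)%E].
Proof.
move=> cB [[B0 BC BU] admB] DB.
have BI : forall P Q, B P -> B Q -> B (P `&` Q).
  move=> P Q bP bQ; rewrite -[P `&` Q]setCK setCI; apply BC; apply BU; apply BC => //.
have BT : B setT by rewrite -setC0; exact: BC.
have finB : forall C n, B C -> fin (section C n).
  by move=> C n /admB [/(_ n) cl _]; exact: clop_dec.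
have [g gs] : exists g : nat -> set X, set_surj setT B g by exact/pcard_surjP.
pose e i := if pselect (B (g i)) is left _ then g i else set0.
have eB i : B (e i) by rewrite /e; case: pselect.
have eS C : B C -> exists i, e i = C.
  move=> BCc; have [i _ gi] := gs C BCc; exists i; rewrite /e.
  by case: pselect => //; rewrite gi.
pose P i := D (e i) /\ (forall j, (j < i)%N -> e j <> e i).
pose U k : set X := [set x | exists i, (i < k)%N /\ P i /\ e i x].
pose E k : set X := [set x | P k /\ e k x].
have US k : U k.+1 = U k `|` E k.
  rewrite predeqE => x; split.
    move=> [i [ik [Pi ex]]]; move: ik; rewrite ltnS leq_eqVlt => /predU1P[eq|lt].
      by right; subst i.
    by left; exists i.
  case=> [[i [ik [Pi ex]]]|[Pk ex]]; first by exists i; split => //; exact: ltnW.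
  by exists k.
have EB k : B (E k).
  rewrite /E; case: (pselect (P k)) => Pk.
    by rewrite (_ : [set x | P k /\ e k x] = e k) // predeqE => x; split => [[]|].
  by rewrite (_ : [set x | P k /\ e k x] = set0) // predeqE => x; split => // -[].
have U0 : U 0 = set0 by rewrite predeqE => x; split => // -[i [+]].
have UB k : B (U k) by elim: k => [|k IH]; [rewrite U0|rewrite US; exact: BU].
have Umono k m : (k <= m)%N -> U k `<=` U m.
  by move=> km x [i [ik Hi]]; exists i; split => //; exact: leq_trans ik km.

pose gi i k := @mu R (U k `&` e i).
pose hi i k := @mu R (~` U k `&` e i).
have gmono i : {homo gi i : n m / (n <= m)%N >-> n <= m}.
  move=> n m nm; apply: mu_le; [apply admB; apply BI|apply admB; apply BI|] => //.
  by move=> x [Ux ex]; split => //; exact: Umono Ux.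
have hmono i : {homo hi i : n m / (n <= m)%N >-> m <= n}.
  move=> n m nm; apply: mu_le; [apply admB; apply BI|apply admB; apply BI|] => //;
    try (apply BC; exact: UB).
  by move=> x [Ux ex]; split => // Ux'; apply: Ux; exact: Umono Ux'.
have gcv i : gi i @ \oo --> sup (range (gi i)).
  apply: nondecreasing_cvgn => //; exists 1 => _ [k _ <-].
  by apply: mu_le1; apply admB; apply BI.
have hcv i : hi i @ \oo --> inf (range (hi i)).
  apply: nonincreasing_cvgn => //; exists 0 => _ [k _ <-].
  by apply: mu_ge0; apply admB; apply BI => //; apply BC.
have N2ex : forall i k, exists N, forall n, (N <= n)%N ->
   `|@lam R (section (U k `&` e i) n) - gi i k| <= k.+1%:R^-1 /\
   `|@lam R (section (~` U k `&` e i) n) - hi i k| <= k.+1%:R^-1.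
  move=> i k.
  have ek : 0 < k.+1%:R^-1 :> R by rewrite invr_gt0.
  have [_ c1] := admB _ (BI _ _ (UB k) (eB i)).
  have [_ c2] := admB _ (BI _ _ (BC _ (UB k)) (eB i)).
  have [N1 H1] := near_ex ((iffLR (cvgrPdist_le _ _)) c1 _ ek).
  have [N2 H2] := near_ex ((iffLR (cvgrPdist_le _ _)) c2 _ ek).
  exists (maxn N1 N2) => n; rewrite geq_max => /andP[n1 n2].
  by split; rewrite distrC; [exact: H1|exact: H2].
pose N2 i k := projT1 (cid (N2ex i k)).
have N2P i k : forall n, (N2 i k <= n)%N -> _ := projT2 (cid (N2ex i k)).
pose N k := (\max_(i < k) N2 (nat_of_ord i) k)%N.
have N2N i k : (i < k)%N -> (N2 i k <= N k)%N.
  move=> ik; rewrite /N. have := @leq_bigmax _ (fun j : 'I_k => N2 (nat_of_ord j) k) (Ordinal ik). done.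
pose fix f n := if n is n'.+1 then (if (N (f n').+1 <= n'.+1)%N then (f n').+1 else f n') else 0%N.
have fN n : (N (f n) <= n)%N.
  elim: n => [|n IH] /=; first by rewrite /N big_ord0.
  by case: ifP => // _; exact: leqW.
have fS n : (f n <= f n.+1)%N by rewrite /=; case: ifP.
have fmono n m : (n <= m)%N -> (f n <= f m)%N.
  move=> /subnK <-; elim: (m - n)%N => [|k IH] //; rewrite addSn; exact: leq_trans IH (fS _).
have fI : forall K, exists n0, forall n, (n0 <= n)%N -> (K <= f n)%N.
  elim=> [|K [n0 IH]]; first by exists 0%N.
  exists (maxn n0 (N K.+1)).+1 => n Hn.
  have [m Hm] : exists m, n = m.+1 by exists n.-1; rewrite prednK // (leq_trans _ Hn).
  subst n; move: Hn; rewrite ltnS geq_max => /andP[h0 h1].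
  have fK := IH _ h0.
  rewrite leq_eqVlt in fK; case/orP: fK => [/eqP fK|fK]; last exact: leq_trans fK (fS m).
  by rewrite /= -fK (leqW h1).
have F2 i n : (i < f n)%N ->
   `|@lam R (section (U (f n) `&` e i) n) - gi i (f n)| <= (f n).+1%:R^-1 /\
   `|@lam R (section (~` U (f n) `&` e i) n) - hi i (f n)| <= (f n).+1%:R^-1.
  move=> ifn; apply: N2P; apply: leq_trans (fN n); exact: N2N.
pose A : set X := fun x => U (f x.1) x.
exists A.
have cvA i : (fun n => @lam R (section (U (f n) `&` e i) n)) @ \oo --> sup (range (gi i)).
  apply: (@diag R _ (gi i) _ f i (gcv i) fI) => n ifn; exact: (F2 i n ifn).1.
have cvAc i : (fun n => @lam R (section (~` U (f n) `&` e i) n)) @ \oo --> inf (range (hi i)).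
  apply: (@diag R _ (hi i) _ f i (hcv i) fI) => n ifn; exact: (F2 i n ifn).2.
pose G : set (set X) := [set W | exists C1 C2, [/\ B C1, B C2 & W = (A `&` C1) `|` (~` A `&` C2)]].
have GA : is_algebra G.
  split.
  - by exists set0, set0; split => //; rewrite !setI0 setU0.
  - move=> W [C1 [C2 [b1 b2 ->]]]; exists (~` C1), (~` C2); split; try (apply BC => //).
    rewrite predeqE => x; split.
      move=> H; have [Ax|nAx] := pselect (A x); [left|right]; split => // Cx; apply: H; [left|right]; by split.
    by case=> [[Ax nC]|[nAx nC]] [[Ax' Cx]|[nAx' Cx]]; [exact: nC|exact: nAx'|exact: nAx|exact: nC].
  - move=> W W' [C1 [C2 [b1 b2 ->]]] [C1' [C2' [b1' b2' ->]]].
    exists (C1 `|` C1'), (C2 `|` C2'); split; try (apply BU => //).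
    rewrite predeqE => x; split.
      case=> [[[Ax C]|[nAx C]]|[[Ax C]|[nAx C]]].
      + by left; split => //; left.
      + by right; split => //; left.
      + by left; split => //; right.
      + by right; split => //; right.
    case=> [[Ax [C|C]]|[nAx [C|C]]].
    + by left; left.
    + by right; left.
    + by left; right.
    + by right; right.
have BG : B `|` [set A] `<=` G.
  move=> W [bW|->].
    exists W, W; split => //; rewrite predeqE => x; split.
      by move=> Wx; have [Ax|nAx] := pselect (A x); [left|right].
    by case=> -[].
  exists setT, set0; split => //; rewrite predeqE => x; split.
    by move=> Ax; left.
  by case=> -[].
have genG W : gen_algebra (B `|` [set A]) W -> G W by move=> H; exact: H _ GA BG.
have genA : is_algebra (gen_algebra (B `|` [set A])).
  split.
  - by move=> F [F0 _ _] _.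
  - by move=> W HW F FA FB; case: (FA) => _ FC _; apply: FC; exact: HW.
  - by move=> W W' HW HW' F FA FB; case: (FA) => _ _ FU; apply: FU; [exact: HW|exact: HW'].
split.
- split => // W /genG [C1 [C2 [b1 b2 ->]]].
  have [i1 ei1] := eS _ b1; have [i2 ei2] := eS _ b2; subst C1 C2.
  split.
    move=> n; have := admB _ (BU _ _ (BI _ _ (UB (f n)) b1) (BI _ _ (BC _ (UB (f n))) b2)).
    by case=> /(_ n).
  have -> : (fun n => @lam R (section ((A `&` e i1) `|` (~` A `&` e i2)) n)) =
     (fun n => @lam R (section (U (f n) `&` e i1) n)) + (fun n => @lam R (section (~` U (f n) `&` e i2) n)).
    apply: funext => n.
    change (@lam R (section ((A `&` e i1) `|` (~` A `&` e i2)) n) = @lam R (section (U (f n) `&` e i1) n) + @lam R (section (~` U (f n) `&` e i2) n)).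
    rewrite -(lamU R) //.
    - by apply: finB; apply: BI.
    - by apply: finB; apply: BI => //; apply BC.
    - by rewrite predeqE => t; split => // -[[? _] [? _]].
  apply: is_cvgD; apply/cvg_ex; [exists (sup (range (gi i1)))|exists (inf (range (hi i2)))]; [exact: cvA|exact: cvAc].
- move=> Dd HD.
  have [j0 ej0] := eS _ (DB _ HD).
  have exj : exists j, `[< e j = Dd >] by exists j0; exact/asboolP.
  case: (ex_minnP exj) => j /asboolP ej minj.
  have Pj : P j.
    split; first by rewrite ej.
    move=> j' j'j ej'; have := minj j' (asboolT (etrans ej' ej)); rewrite leqNgt j'j.
    done.
  have [n0 Hn0] := fI j.+1.
  exists n0 => n /Hn0 jfn t Ddt; exists j; split => //; split => //; by rewrite ej.
- have [i0 ei0] := eS _ BT.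
  have muA : @mu R A = sup (range (gi i0)).
    apply: cvg_lim => //.
    have -> : (fun n => @lam R (section A n)) = (fun n => @lam R (section (U (f n) `&` e i0) n)).
      by apply: funext => n; rewrite ei0 setIT.
    exact: cvA.
  have Sk : forall k, ((@mu R (U k))%:E <= \sum_(i \in [set i | (i < k)%N /\ P i]) (@mu R (e i))%:E)%E.
    elim=> [|k IH].
      rewrite U0 mu0 (_ : [set i | (i < 0)%N /\ P i] = set0) ?fsbig_set0 //.
      by rewrite predeqE => i; split => // -[].
    rewrite US.
    apply: (@le_trans _ _ ((@mu R (U k))%:E + (@mu R (E k))%:E)%E).
      rewrite -EFinD lee_fin; apply: mu_subadd; apply admB => //; exact: BU.
    have [Pk|nPk] := pselect (P k).
      have -> : E k = e k by rewrite predeqE => x; split => [[]|].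
      have -> : [set i | (i < k.+1)%N /\ P i] = [set i | (i < k)%N /\ P i] `|` [set k].
        rewrite predeqE => i; split.
          by move=> [+ Pi]; rewrite ltnS leq_eqVlt => /predU1P[->|ik]; [right|left].
        by case=> [[ik Pi]|->]; split => //; exact: ltnW.
      rewrite fsbigU ?fsbig_set1; first by rewrite leeD2r.
      + by apply: (sub_finite_set _ (finite_II k)) => i [ik _].
      + exact: finite_set1.
      + by move=> i [[ik _] ki]; rewrite ki ltnn in ik.
    have -> : E k = set0 by rewrite predeqE => x; split => // -[].
    rewrite mu0 adde0.
    have -> : [set i | (i < k.+1)%N /\ P i] = [set i | (i < k)%N /\ P i] => //.
    rewrite predeqE => i; split.
      by move=> [+ Pi]; rewrite ltnS leq_eqVlt => /predU1P[ei|ik] //; subst i.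
    by case=> ik Pi; split => //; exact: ltnW.
  have Sk' : forall k, ((@mu R (U k))%:E <= \esum_(Dd in D) (@mu R Dd)%:E)%E.
    move=> k; apply: esum_ge; exists (e @` [set i | (i < k)%N /\ P i]).
      split.
        by apply: finite_image; apply: (sub_finite_set _ (finite_II k)) => i [ik _].
      by move=> _ [i [_ [Di _]] <-].
    rewrite fsbig_image; first exact: Sk k.
    move=> i j /set_mem [ik [Di Pi]] /set_mem [jk [Dj Pj]] eij.
    case: (ltngtP i j) => [h|h|//]; exfalso; [exact: Pj _ h eij | exact: Pi _ h (esym eij)].
  rewrite muA; move: Sk'.
  case: (\esum_(Dd in D) (@mu R Dd)%:E)%E => [r| |] Sk'; last first.
  - by have := Sk' 0%N; rewrite U0 mu0.
  - by rewrite leey.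
  rewrite lee_fin; apply: ge_sup; first by exists (gi i0 0%N), 0%N.
  move=> _ [k _ <-]; rewrite /gi ei0 setIT -lee_fin; exact: Sk' k.
Qed.
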